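(* Let $\mathcal{X}$ be a probability distribution over a set of queries, $k \geq 1$, and $\hat q_1,\dots,\hat q_k,\hat c_1,\dots,\hat c_k : \mathcal{X} \to \mathbb{R}$ integrable functions, and assume the set $\Lambda$ is finite. Let $0 \leq \lambda_1 < \lambda_2$ and let $s^{(1)} \in S_{\lambda_1}$, $s^{(2)} \in S_{\lambda_2}$ have costs $B_1 = C(s^{(1)})$ and $B_2 = C(s^{(2)})$ respectively. Then for every $B \in [B_2, B_1]$ there exists $\lambda \in [\lambda_1,\lambda_2]$ such that $S_\lambda$ contains a routing strategy $s$ with $C(s) = B$.
   Context: A routing strategy is a measurable function $s : \mathcal{X} \to \mathbb{R}^k$ with $s_i(x) \geq 0$ for all $i$ and $\sum_{i=1}^k s_i(x) = 1$ for all $x$; its cost is $C(s) = \mathbb{E}_{x \sim \mathcal{X}}\left[\sum_{i=1}^k s_i(x)\hat c_i(x)\right]$. For $\lambda \in \mathbb{R}^+$, $S_\lambda$ is the set of routing strategies $s$ such that for all $x \in \mathcal{X}$ and $i \in \{1,\dots,k\}$: if $\hat q_i(x) - \lambda \hat c_i(x) < \max_j(\hat q_j(x) - \lambda \hat c_j(x))$ then $s_i(x) = 0$. $\Lambda$ is the set of $\lambda \in \mathbb{R}$ for which there exist $x \in \mathcal{X}$ and $i \neq j$ with $\hat q_i(x) - \lambda \hat c_i(x) = \hat q_j(x) - \lambda \hat c_j(x)$. *)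

(* Defs.v *)
From HB Require Import structures.
From mathcomp Require Import all_boot all_order all_algebra.
From mathcomp Require Import all_classical all_reals all_analysis.
Set Implicit Arguments. Unset Strict Implicit. Unset Printing Implicit Defensive.
Import Order.TTheory GRing.Theory Num.Theory.
Local Open Scope classical_set_scope.
Local Open Scope ring_scope.

Section Routing.
Context {d : measure_display} {X : measurableType d} {R : realType} {k : nat}.

Definition routing_strategy (s : X -> 'I_k -> R) : Prop :=
  (forall i, measurable_fun setT (fun x => s x i)) /\
  (forall x i, 0 <= s x i) /\
  (forall x, \sum_(i < k) s x i = 1).

Definition cost (P : probability X R) (c : 'I_k -> X -> R)
  (s : X -> 'I_k -> R) : \bar R :=
  (\int[P]_x (\sum_(i < k) s x i * c i x)%:E)%E.

Definition in_S (q c : 'I_k -> X -> R) (lam : R) (s : X -> 'I_k -> R) : Prop :=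
  routing_strategy s /\
  forall x i, q i x - lam * c i x < \big[Num.max/q i x - lam * c i x]_(j < k) (q j x - lam * c j x) ->
    s x i = 0.

Definition Lambda (q c : 'I_k -> X -> R) : set R :=
  [set lam | exists x i j, i != j /\ q i x - lam * c i x = q j x - lam * c j x].

End Routing.

(* Main.v *)
Require Import Defs.
From HB Require Import structures.
From mathcomp Require Import all_boot all_order all_algebra.
From mathcomp Require Import all_classical all_reals all_analysis.
From mathcomp Require Import measurable_realfun ring lra.
Import Order.TTheory GRing.Theory Num.Theory.
Local Open Scope classical_set_scope.
Local Open Scope ring_scope.

Section Aux.
Context {d : measure_display} {X : measurableType d} {R : realType} {k : nat}.
Variables (P : probability X R) (q c : 'I_k -> X -> R).
Hypothesis hk : (0 < k)%N.
Implicit Types (s t u : X -> 'I_k -> R).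
Hypotheses (hq : forall i, P.-integrable setT (fun x => (q i x)%:E))
  (hc : forall i, P.-integrable setT (fun x => (c i x)%:E)).

Lemma mq i : measurable_fun setT (q i).
Proof. by apply/measurable_EFinP; exact: measurable_int (hq i). Qed.
Lemma mc i : measurable_fun setT (c i).
Proof. by apply/measurable_EFinP; exact: measurable_int (hc i). Qed.

Definition f (lam : R) i x := q i x - lam * c i x.

Lemma mf lam i : measurable_fun setT (f lam i).
Proof.
apply: measurable_funB; first exact: mq.
exact: (measurable_funM (measurable_cst lam) (mc i)).
Qed.

Lemma measurable_bigmax (I : Type) (r : seq I) (Pr : pred I) (h0 : X -> R)
  (h : I -> X -> R) : measurable_fun setT h0 -> (forall i, measurable_fun setT (h i)) ->
  measurable_fun setT (fun x => \big[Num.max/h0 x]_(i <- r | Pr i) h i x).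
Proof.
move=> m0 mh; elim: r => [|a r ih].
  by under eq_fun do rewrite big_nil.
under eq_fun do rewrite big_cons.
case: (Pr a) => //.
exact: (measurable_maxr (mh a) ih).
Qed.

Lemma in_S_intro lam s : routing_strategy s ->
  (forall x i, s x i != 0 -> forall j, f lam j x <= f lam i x) -> in_S q c lam s.
Proof.
move=> rs H; split=> // x i lt; apply/eqP; apply: contraTT lt => /H Hle.
rewrite -leNgt; apply/bigmax_leP; split => [|j _]; [exact: lexx|exact: Hle].
Qed.

Lemma in_S_elim lam s : in_S q c lam s ->
  forall x i, s x i != 0 -> forall j, f lam j x <= f lam i x.
Proof.
move=> [_ H] x i nz j; rewrite leNgt; apply/negP => lt.
have H' := H x i (lt_le_trans lt (le_bigmax (q i x - lam * c i x) (fun j => q j x - lam * c j x) j)).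
by move: nz; rewrite H' eqxx.
Qed.


Lemma rs_le1 s : routing_strategy s -> forall x i, s x i <= 1.
Proof.
move=> [_ [h0 h1]] x i; rewrite -(h1 x) (bigD1 i) //= lerDl.
by apply: sumr_ge0 => j _; exact: h0.
Qed.

Definition mix (a : R) (s t : X -> 'I_k -> R) := fun x i => (1 - a) * s x i + a * t x i.

Lemma mix_rs a s t : 0 <= a <= 1 -> routing_strategy s -> routing_strategy t ->
  routing_strategy (mix a s t).
Proof.
move=> /andP[a0 a1] [ms [s0 s1]] [mt [t0 t1]]; split; [|split].
- move=> i; apply: measurable_funD.
    exact: (measurable_funM (measurable_cst _) (ms i)).
  exact: (measurable_funM (measurable_cst _) (mt i)).
- move=> x i; rewrite /mix addr_ge0 // mulr_ge0 // ?subr_ge0 //.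
- move=> x; rewrite /mix big_split /= -!mulr_sumr s1 t1; ring.
Qed.

Lemma mix_in_S lam a s t : 0 <= a <= 1 -> in_S q c lam s -> in_S q c lam t ->
  in_S q c lam (mix a s t).
Proof.
move=> ha [rs Hs] [rt Ht]; split; first exact: mix_rs.
by move=> x i lt; rewrite /mix (Hs x i lt) (Ht x i lt) !mulr0 addr0.
Qed.

Lemma int_sc s : routing_strategy s ->
  P.-integrable setT (fun x => (\sum_(i < k) s x i * c i x)%:E).
Proof.
move=> hs; have [ms [s0 s1]] := hs.
apply: (@le_integrable _ _ _ P setT measurableT _ (fun x => (\sum_(i < k) `|c i x|)%:E)).
- apply/measurable_EFinP; apply: measurable_sum => i.
  exact: (measurable_funM (ms i) (mc i)).
- move=> x _; rewrite !abse_EFin lee_fin [X in _ <= X]ger0_norm; last by apply: sumr_ge0 => *.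
  apply: le_trans (ler_norm_sum _ _ _) _; apply: ler_sum => i _.
  rewrite normrM (ger0_norm (s0 x i)).
  have := @rs_le1 s hs x i; have := s0 x i; have := normr_ge0 (c i x); nra.
- under eq_fun do rewrite -sumEFin.
  apply: integrable_sum => // i _.
  exact: (integrable_norm (hc i)).
Qed.

Arguments int_sc {s}.

Lemma cost_fin s : routing_strategy s -> cost P c s = (fine (cost P c s))%:E.
Proof. by move=> hs; rewrite fineK //; exact: (integrable_fin_num measurableT (int_sc hs)). Qed.

Lemma cost_mix a s t Bs Bt : routing_strategy s -> routing_strategy t ->
  cost P c s = Bs%:E -> cost P c t = Bt%:E ->
  cost P c (mix a s t) = ((1 - a) * Bs + a * Bt)%:E.
Proof.
rewrite /cost => hs ht Hs Ht.
transitivity (\int[P]_x (((1 - a)%:E * (\sum_(i < k) s x i * c i x)%:E) +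
   (a%:E * (\sum_(i < k) t x i * c i x)%:E)))%E.
  apply: eq_integral => x _; rewrite -!EFinM -EFinD; congr EFin.
  rewrite /mix !mulr_sumr -big_split; apply: eq_bigr => i _ /=; ring.
rewrite (integralD measurableT (integrableZl measurableT _ (int_sc hs))
  (integrableZl measurableT _ (int_sc ht))).
rewrite (integralZl measurableT (int_sc hs)) (integralZl measurableT (int_sc ht)).
by rewrite Hs Ht -!EFinM -EFinD.
Qed.

Arguments cost_mix a {s t Bs Bt}.

Lemma ivt_pair lam s t Bs Bt B : in_S q c lam s -> in_S q c lam t ->
  cost P c s = Bs%:E -> cost P c t = Bt%:E ->
  (Bs <= B <= Bt) \/ (Bt <= B <= Bs) ->
  exists u, in_S q c lam u /\ cost P c u = B%:E.
Proof.
move=> hs ht Hs Ht hB.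
have [eq|ne] := eqVneq Bs Bt.
  exists s; split => //; rewrite Hs; congr EFin.
  by subst Bt; case: hB => /andP[h1 h2]; apply/eqP; rewrite eq_le h1 h2.
set a := (B - Bs) / (Bt - Bs).
have hne : Bt - Bs != 0 by rewrite subr_eq0 eq_sym.
have ha : 0 <= a <= 1.
  rewrite /a; case: hB => /andP[h1 h2].
  - have hp : 0 < Bt - Bs by rewrite lt_neqAle eq_sym hne /= subr_ge0 (le_trans h1 h2).
    apply/andP; split; first by apply: divr_ge0; [rewrite subr_ge0|exact: ltW].
    by rewrite ler_pdivrMr // mul1r lerB.
  - have hn : Bt - Bs < 0 by rewrite lt_neqAle hne /= subr_le0 (le_trans h1 h2).
    apply/andP; split; first by rewrite ler_ndivlMr // mul0r subr_le0.
    by rewrite ler_ndivrMr // mul1r lerB.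
exists (mix a s t); split; first exact: mix_in_S.
rewrite (cost_mix a hs.1 ht.1 Hs Ht); congr EFin.
rewrite /a; field; exact: hne.
Qed.

Arguments in_S_elim {lam s}.
Arguments cost_fin {s}.
Arguments ivt_pair {lam s t Bs Bt B}.

Lemma stable l1 l2 nu lam s : (forall mu, l1 < mu < l2 -> ~ Lambda q c mu) ->
  l1 < nu < l2 -> l1 <= lam <= l2 -> in_S q c nu s -> in_S q c lam s.
Proof.
move=> hL /andP[hn1 hn2] /andP[hl1 hl2] hs; apply: in_S_intro; first exact: hs.1.
move=> x i nz j; have Hle := in_S_elim hs x i nz j.
rewrite leNgt; apply/negP => lt.
have ij : i != j by apply: contraTneq lt => ->; rewrite ltxx.
rewrite /f in Hle lt.
set A := q i x - q j x; set C := c i x - c j x.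
have hnu : 0 < A - nu * C.
  rewrite lt_neqAle; apply/andP; split; last by rewrite /A /C; lra.
  apply/negP => /eqP h; apply: (hL nu); first by rewrite hn1 hn2.
  exists x, i, j; split => //; rewrite /A /C in h; lra.
have hlam : A - lam * C < 0 by rewrite /A /C; lra.
have hC : C != 0 by apply/negP => /eqP hC0; rewrite hC0 in hnu hlam; lra.
set mu := A / C.
have hmu : mu * C = A by rewrite /mu divfK.
have Lmu : Lambda q c mu.
  exists x, i, j; split => //; rewrite /A /C in hmu; lra.
apply: (hL mu) => //.
have [Cneg|Cpos|C0] := ltgtP C 0; last by rewrite C0 eqxx in hC.
- have h1 : mu < nu by rewrite /mu ltr_ndivrMr //; lra.
  have h2 : lam < mu by rewrite /mu ltr_ndivlMr //; lra.
  apply/andP; split; lra.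
- have h1 : nu < mu by rewrite /mu ltr_pdivlMr //; lra.
  have h2 : mu < lam by rewrite /mu ltr_pdivrMr //; lra.
  apply/andP; split; lra.
Qed.

Arguments stable {l1 l2 nu lam s}.

Definition M lam x := \big[Num.max/f lam (Ordinal hk) x]_(j < k) f lam j x.
Definition fm lam x (i : 'I_k) : bool := (M lam x <= f lam i x) &&
  (\big[Num.max/(M lam x - 1)]_(j < k | (j < i)%N) f lam j x < M lam x).
Definition gstrat lam : X -> 'I_k -> R := fun x i => if fm lam x i then 1 else 0.

Lemma gstrat_in_S lam : in_S q c lam (gstrat lam).
Proof.
have mM : measurable_fun setT (M lam).
  by rewrite /M; apply: measurable_bigmax => // *; exact: mf.
apply: in_S_intro; [split; [|split]|].
- move=> i; apply: measurable_fun_ifT; [|exact: measurable_cst..].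
  apply: measurable_and; first exact: (measurable_fun_ler mM (mf lam i)).
  apply: measurable_fun_ltr => //; apply: measurable_bigmax => [|j]; last exact: mf.
  exact: (measurable_funB mM (measurable_cst (1:R))).
- by move=> x i; rewrite /gstrat; case: ifP.
- move=> x.
  have [j0 Hj0] : exists j, M lam x <= f lam j x.
    apply/not_existsP => nex.
    have : M lam x < M lam x.
      rewrite {1}/M; apply/bigmax_ltP; split; last first.
        by move=> j _; rewrite ltNge; apply/negP => h; apply: (nex j).
      by rewrite ltNge; apply/negP => h; apply: (nex (Ordinal hk)).
    by rewrite ltxx.
  case: (@arg_minnP _ j0 (fun j => M lam x <= f lam j x) (fun j => nat_of_ord j) Hj0).
  move=> i1 Ei1 mini1.
  rewrite (bigD1 i1) //= big1 ?addr0.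
  + have H : \big[Num.max/(M lam x - 1)]_(j < k | (j < i1)%N) f lam j x < M lam x.
      apply/bigmax_ltP; split; first by rewrite gtrBl ltr01.
      move=> j ji; rewrite ltNge; apply/negP => Ej.
      by have := mini1 j Ej; rewrite leqNgt ji.
    by rewrite /gstrat /fm Ei1 H.
  + move=> i ne; rewrite /gstrat /fm; case Ei: (M lam x <= f lam i x) => //=.
    rewrite ifF //; apply/negbTE; rewrite -leNgt.
    apply: (bigmax_sup i1) => //.
    rewrite ltn_neqAle (mini1 i Ei) andbT.
    by apply: contraNneq ne => h; apply/eqP; apply: val_inj; rewrite /= h.
- move=> x i; rewrite /gstrat; case: ifP => [/andP[hM _] _ j|_]; last by rewrite eqxx.
  apply: le_trans hM; exact: (le_bigmax (f lam (Ordinal hk) x) (fun j => f lam j x) j).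
Qed.

Lemma between_split (B1 B2 C B : R) : (B1 <= B <= B2) \/ (B2 <= B <= B1) ->
  ((B1 <= B <= C) \/ (C <= B <= B1)) \/ ((C <= B <= B2) \/ (B2 <= B <= C)).
Proof.
move=> hB; case: (lerP B C) => hC; case: hB => /andP[h1 h2].
- by left; left; apply/andP; split.
- by right; right; apply/andP; split.
- by right; left; apply/andP; split => //; exact: ltW.
- by left; right; apply/andP; split => //; exact: ltW.
Qed.

Arguments between_split {B1 B2} C {B}.

Lemma base l1 l2 s1 s2 B1 B2 B : l1 < l2 ->
  (forall mu, l1 < mu < l2 -> ~ Lambda q c mu) ->
  in_S q c l1 s1 -> in_S q c l2 s2 -> cost P c s1 = B1%:E -> cost P c s2 = B2%:E ->
  (B1 <= B <= B2) \/ (B2 <= B <= B1) ->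
  exists lam, l1 <= lam <= l2 /\ exists s, in_S q c lam s /\ cost P c s = B%:E.
Proof.
move=> h12 hL hs1 hs2 hB1 hB2 hB.
set nu := (l1 + l2) / 2.
have hnu : l1 < nu < l2 by apply/andP; split; rewrite /nu; lra.
have g1 : in_S q c l1 (gstrat nu).
  by apply: (stable hL hnu) => //; [rewrite lexx ltW | exact: gstrat_in_S].
have g2 : in_S q c l2 (gstrat nu).
  by apply: (stable hL hnu) => //; [rewrite lexx ltW | exact: gstrat_in_S].
have hC := cost_fin (gstrat_in_S nu).1.
case: (between_split (fine (cost P c (gstrat nu))) hB) => hh.
- exists l1; split; first by rewrite lexx ltW.
  exact: (ivt_pair hs1 g1 hB1 hC hh).
- exists l2; split; first by rewrite lexx ltW.
  exact: (ivt_pair g2 hs2 hC hB2 hh).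
Qed.

Arguments base {l1 l2 s1 s2 B1 B2 B}.

Lemma main_ind n : forall (l : seq R), uniq l -> (size l <= n)%N ->
  forall l1 l2 s1 s2 B1 B2 B, l1 < l2 ->
  (forall mu, l1 < mu < l2 -> Lambda q c mu -> mu \in l) ->
  in_S q c l1 s1 -> in_S q c l2 s2 -> cost P c s1 = B1%:E -> cost P c s2 = B2%:E ->
  (B1 <= B <= B2) \/ (B2 <= B <= B1) ->
  exists lam, l1 <= lam <= l2 /\ exists s, in_S q c lam s /\ cost P c s = B%:E.
Proof.
elim: n => [|n IH] l ul sl l1 l2 s1 s2 B1 B2 B h12 hl hs1 hs2 hB1 hB2 hB.
  apply: (base h12 _ hs1 hs2 hB1 hB2 hB) => mu hmu hL.
  by have := hl mu hmu hL; move: sl; rewrite leqn0 => /nilP ->.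
have [[mu [hmu hLmu]]|nex] := pselect (exists mu, l1 < mu < l2 /\ Lambda q c mu); last first.
  apply: (base h12 _ hs1 hs2 hB1 hB2 hB) => mu hmu hL.
  by apply: nex; exists mu.
have mul := hl mu hmu hLmu.
have ul' : uniq (rem mu l) by exact: rem_uniq.
have sl' : (size (rem mu l) <= n)%N.
  by rewrite size_rem //; move: sl; case: (size l).
have hC := cost_fin (gstrat_in_S mu).1.
have /andP[hm1 hm2] := hmu.
have hlA : forall nu, l1 < nu < mu -> Lambda q c nu -> nu \in rem mu l.
  move=> nu /andP[? ?] hL; rewrite mem_rem_uniq //= inE.
  apply/andP; split; first by rewrite lt_eqF.
  by apply: hl => //; apply/andP; split; lra.
have hlB : forall nu, mu < nu < l2 -> Lambda q c nu -> nu \in rem mu l.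
  move=> nu /andP[? ?] hL; rewrite mem_rem_uniq //= inE.
  apply/andP; split; first by rewrite gt_eqF.
  by apply: hl => //; apply/andP; split; lra.
case: (between_split (fine (cost P c (gstrat mu))) hB) => hh.
- have [lam [hlam rest]] := IH _ ul' sl' l1 mu s1 (gstrat mu) _ _ B hm1
    hlA hs1 (gstrat_in_S mu) hB1 hC hh.
  exists lam; split => //; move: hlam => /andP[? ?]; apply/andP; split; lra.
- have [lam [hlam rest]] := IH _ ul' sl' mu l2 (gstrat mu) s2 _ _ B hm2
    hlB (gstrat_in_S mu) hs2 hC hB2 hh.
  exists lam; split => //; move: hlam => /andP[? ?]; apply/andP; split; lra.
Qed.

End Aux.

Theorem lemma5 (d : measure_display) (X : measurableType d) (R : realType)
  (P : probability X R) (k : nat) (hk : (0 < k)%N)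
  (q c : 'I_k -> X -> R)
  (hq : forall i, P.-integrable setT (fun x => (q i x)%:E))
  (hc : forall i, P.-integrable setT (fun x => (c i x)%:E))
  (hfin : finite_set (Lambda q c))
  (lam1 lam2 : R) (h0 : 0 <= lam1) (h12 : lam1 < lam2)
  (s1 s2 : X -> 'I_k -> R) (hs1 : in_S q c lam1 s1) (hs2 : in_S q c lam2 s2)
  (B1 B2 : R) (hB1 : cost P c s1 = B1%:E) (hB2 : cost P c s2 = B2%:E) :
  forall B : R, B2 <= B <= B1 ->
    exists lam : R, lam1 <= lam <= lam2 /\
      exists s : X -> 'I_k -> R, in_S q c lam s /\ cost P c s = B%:E.
Proof.
move=> B hB.
have [s0 E] := (finite_seqP _).1 hfin.
apply: (main_ind P q c hk hq hc (size (undup s0)) (undup s0) (undup_uniq s0) (leqnn _) lam1 lam2 s1 s2 B1 B2 B h12 _ hs1 hs2 hB1 hB2 (or_intror hB)).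
move=> mu _ hL; rewrite mem_undup; move: hL; rewrite E; done.
Qed.
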